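(* Let $\mathbb{X}$, $R$, $\ell$, $r_{\mathbb{X}}$ and $\mathfrak{J}_{R/\mathbb{F}_q[\ell]}$ be as in the context, and let $i\ge0$. Then the Hilbert function of the $i$-th doubling $D^{(i)}_{\mathbb{X}}=R/\ell^i\mathfrak{J}_{R/\mathbb{F}_q[\ell]}$ satisfies $\dim_{\mathbb{F}_q}(D^{(i)}_{\mathbb{X}})_j=\mathrm{HF}_{\mathbb{X}}(j)$ for $j<r_{\mathbb{X}}+i$ and $\dim_{\mathbb{F}_q}(D^{(i)}_{\mathbb{X}})_{r_{\mathbb{X}}+i+j}=\mathrm{HF}_{\mathbb{X}}(r_{\mathbb{X}}-1-j)$ for $j\ge0$. In particular, the largest degree $d$ with $(D^{(i)}_{\mathbb{X}})_d\ne0$ is $d=2r_{\mathbb{X}}+i-1$.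
   Context: Let $P=\mathbb{F}_q[x_1,\dots,x_k]$ (standard grading), $\mathbb{X}=\{p_1,\dots,p_n\}$ a set of $n$ distinct $\mathbb{F}_q$-rational points of $\mathbb{P}^{k-1}$, $I_{\mathbb{X}}$ its homogeneous vanishing ideal, $R=P/I_{\mathbb{X}}$, $\mathrm{HF}_{\mathbb{X}}(i)=\dim R_i$ for $i\ge0$ and $0$ for $i<0$, and $r_{\mathbb{X}}=\min\{i\ge0:\mathrm{HF}_{\mathbb{X}}(i)=n\}$. Standing assumption: $L\in P_1$ is a linear form with $L(p_j)\ne0$ for all $j$, and $\ell$ is its residue class in $R$. Each $p_j$ is represented by the coordinate vector $v_j$ with $L(v_j)=1$, and $f(p_j)=f(v_j)$ for homogeneous $f$. The separators are the unique $f_1,\dots,f_n\in R_{r_{\mathbb{X}}}$ with $f_i(p_j)=\delta_{ij}$. The canonical ideal is $\mathfrak{J}_{R/\mathbb{F}_q[\ell]}=\{\sum_{i=1}^n\varphi(f_i)f_i:\varphi\in\mathrm{Hom}_{\mathbb{F}_q[\ell]}(R,\mathbb{F}_q[\ell])\}\subseteq R$, a homogeneous ideal of $R$. *)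

(* Defs.v *)
From HB Require Import structures.
From mathcomp Require Import all_boot all_order all_algebra all_field.
From mathcomp Require Import mpoly.
From Stdlib Require Import ClassicalEpsilon.

Set Implicit Arguments.
Unset Strict Implicit.
Unset Printing Implicit Defensive.

Import Order.TTheory GRing.Theory.
Local Open Scope ring_scope.

(* Throughout: F = F_q (an arbitrary finite field), P = F[x_0,...,x_k]
   = {mpoly F[k.+1]} (so the paper's number of variables is k.+1),
   points of P^k are given by coordinate row vectors. *)

Section Doubling.
Variables (F : finFieldType) (k : nat).
Local Notation P := {mpoly F[k.+1]}.

Definition pbool (A : Prop) : bool :=
  if excluded_middle_informative A then true else false.

Definition ev (f : P) (v : 'rV[F]_k.+1) : F := f.@[fun j => v ord0 j].

(* dim_F of the degree-d part of P/K, where K is a (homogeneous) subset: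
   dim P_d - dim span (K ∩ P_d). *)
Definition hpart (K : P -> Prop) (d : nat) : {vspace dhomog k.+1 F d} :=
  <<[seq (x : dhomog k.+1 F d)
       | x <- enum (finvect_type (dhomog k.+1 F d))
       & pbool (K (mpoly_of_dhomog x))]>>%VS.

Definition qdim (K : P -> Prop) (d : nat) : nat :=
  (\dim (fullv : {vspace dhomog k.+1 F d}) - \dim (hpart K d))%N.

Variables (n : nat) (pts : 'I_n -> 'rV[F]_k.+1) (L : P).

(* homogeneous vanishing ideal I_X: all homogeneous components of f
   vanish at every point *)
Definition IX (f : P) : Prop :=
  forall (d : nat) (j : 'I_n), ev (pihomog mdeg d f) (pts j) = 0.

(* congruence modulo I_X, i.e. equality in R = P / I_X *)
Definition eqI (f g : P) : Prop := IX (f - g).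

(* Hilbert function of X, HF_X(j) = dim_F R_j, extended by 0 to negative j *)
Definition HF (j : nat) : nat := qdim IX j.
Definition HFz (z : int) : nat := if z is Posz m then HF m else 0%N.

Definition is_rX (r : nat) : Prop :=
  HF r = n /\ forall j, (j < r)%N -> HF j <> n.

(* the normalized representative v_j of p_j with L(v_j) = 1 *)
Definition nv (j : 'I_n) : 'rV[F]_k.+1 := (ev L (pts j))^-1 *: pts j.

(* (representatives in P of) the separators f_1..f_n in R_{r} *)
Definition is_separators (r : nat) (s : 'I_n -> P) : Prop :=
  forall i, s i \is r.-homog /\ forall j, ev (s i) (nv j) = (i == j)%:R.

(* (representatives of) elements of the subring F[l] of R *)
Definition inFl (f : P) : Prop :=
  exists c : {poly F}, eqI f (\sum_(m < size c) c`_m *: L ^+ m).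

(* (lifts P -> P of) F[l]-module homomorphisms R -> F[l] *)
Definition is_Fl_hom (phi : P -> P) : Prop :=
  [/\ forall f, IX f -> IX (phi f),
      forall f g, eqI (phi (f + g)) (phi f + phi g),
      forall c f, inFl c -> eqI (phi (c * f)) (c * phi f)
    & forall f, inFl (phi f)].

(* preimage in P of the canonical ideal J_{R/F[l]} *)
Definition canJ (r : nat) (g : P) : Prop :=
  exists phi : P -> P, exists s : 'I_n -> P,
    [/\ is_Fl_hom phi, is_separators r s &
        eqI g (\sum_(i < n) phi (s i) * s i)].

(* preimage in P of the ideal l^i J of R; D^(i) = R / l^i J = P / dblK r i *)
Definition dblK (r i : nat) (f : P) : Prop :=
  exists g, canJ r g /\ eqI f (L ^+ i * g).

Definition HFD (r i d : nat) : nat := qdim (dblK r i) d.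

End Doubling.

(* Main.v *)
Require Import Defs.
From HB Require Import structures.
From mathcomp Require Import all_boot all_order all_algebra all_field.
From mathcomp Require Import mpoly.
From mathcomp Require Import zify.
From Stdlib Require Import ClassicalEpsilon.
Import GRing.Theory.
Local Open Scope ring_scope.
Section S.
Variables (F : finFieldType) (k n : nat).
Local Notation P := {mpoly F[k.+1]}.
Lemma pihomogMl e m (q p : P) : q \is e.-homog ->
  pihomog mdeg m (q * p) = if (e <= m)%N then q * pihomog mdeg (m - e) p else 0.
Proof.
move=> hq.
have hK : (msize p <= (msize p + m).+1)%N by apply/leqW/leq_addr.
rewrite {1}(pihomog_partitionE hK) mulr_sumr linear_sum /=.
have E1 d : pihomog mdeg m (q * pihomog mdeg d p) =
    if (e + d == m)%N then q * pihomog mdeg d p else 0.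
  have hh : q * pihomog mdeg d p \is (e + d).-homog by apply: dhomogM => //; apply: pihomogP.
  case: eqP => [<-|/eqP ne]; first by rewrite pihomog_dE.
  by rewrite (pihomog_ne0 ne hh).
under eq_bigr do rewrite E1.
case: leqP => hem.
  have hlt : (m - e < (msize p + m).+1)%N by rewrite ltnS (leq_trans (leq_subr _ _)) // leq_addl.
  rewrite -big_mkcond /= (big_pred1 (Ordinal hlt)) //= => d.
  by apply/idP/eqP => [/eqP h|->]; [apply: val_inj => /=; rewrite -[X in (X - e)%N]h addKn | rewrite /= subnKC].
by rewrite big1 // => d _; case: eqP => // hd; move: hem; rewrite -[X in (X < e)%N]hd ltnNge leq_addr.
Qed.

Variables (pts : 'I_n -> 'rV[F]_k.+1) (L : P).
Hypothesis L_lin : L \is 1.-homog.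
Hypothesis L_nz : forall j, ev L (pts j) != 0.

Lemma ev_scale d (h : P) c v : h \is d.-homog -> ev h (c *: v) = c ^+ d * ev h v.
Proof.
move=> /dhomogP hh; rewrite /ev !mevalE mulr_sumr; apply: eq_big_seq => m mm.
rewrite mulrCA; congr (_ * _).
under eq_bigr do rewrite mxE exprMn.
by rewrite big_split /= prodrXr -mdegE hh.
Qed.

Lemma evM (p q : P) v : ev (p * q) v = ev p v * ev q v.
Proof. by rewrite /ev mevalM. Qed.
Lemma ev1 v : ev (1 : P) v = 1.
Proof. by rewrite /ev meval1. Qed.
Lemma evX (p : P) a v : ev (p ^+ a) v = ev p v ^+ a.
Proof. by elim: a => [|a IH]; rewrite ?expr0 ?ev1 // !exprS evM IH. Qed.
Lemma evD (p q : P) v : ev (p + q) v = ev p v + ev q v.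
Proof. by rewrite /ev mevalD. Qed.
Lemma evZ c (p : P) v : ev (c *: p) v = c * ev p v.
Proof. by rewrite /ev mevalZ. Qed.
Lemma ev0 v : ev (0 : P) v = 0.
Proof. by rewrite /ev meval0. Qed.
Lemma evB (p q : P) v : ev (p - q) v = ev p v - ev q v.
Proof. by rewrite /ev mevalB. Qed.
Lemma ev_sum I (r : seq I) (Pr : pred I) (f : I -> P) v :
  ev (\sum_(x <- r | Pr x) f x) v = \sum_(x <- r | Pr x) ev (f x) v.
Proof. by rewrite /ev raddf_sum. Qed.

Local Notation nv := (nv pts L).

Lemma ev_nv d (h : P) j : h \is d.-homog -> ev h (nv j) = (ev L (pts j))^-1 ^+ d * ev h (pts j).
Proof. exact: ev_scale. Qed.
Arguments ev_nv {d h} j.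

Lemma evL1 j : ev L (nv j) = 1.
Proof. by rewrite (ev_nv j L_lin) expr1 mulVf. Qed.

Lemma evLX a j : ev (L ^+ a) (nv j) = 1.
Proof. by rewrite evX evL1 expr1n. Qed.

Lemma LX_homog t : L ^+ t \is t.-homog.
Proof. by have := dhomogMn t L_lin; rewrite mul1n. Qed.

Definition Ev (d : nat) (p : P) : 'rV[F]_n := \row_j ev (pihomog mdeg d p) (nv j).

Lemma Ev_is_linear d : linear (Ev d).
Proof.
move=> c p q; apply/rowP => j; rewrite !mxE.
by rewrite linearP /= evD evZ.
Qed.
HB.instance Definition _ d := GRing.isLinear.Build F P 'rV[F]_n _ (Ev d) (Ev_is_linear d).

Lemma IX_Ev (p : P) : IX pts p <-> forall d, Ev d p = 0.
Proof.
split=> [h d|h d j]; first by apply/rowP => j; rewrite !mxE (ev_nv j (pihomogP _ _ _)) h mulr0.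
have := congr1 (fun x : 'rV[F]_n => x 0 j) (h d); rewrite !mxE (ev_nv j (pihomogP _ _ _)).
move/eqP; rewrite mulf_eq0 expf_eq0 invr_eq0 (negbTE (L_nz j)) andbF /=.
by move/eqP.
Qed.

Lemma eqI_Ev (p q : P) : eqI pts p q <-> forall d, Ev d p = Ev d q.
Proof.
rewrite /eqI IX_Ev; split=> h d; last by rewrite linearB /= h subrr.
by apply/eqP; rewrite -subr_eq0 -linearB /=; apply/eqP.
Qed.

Lemma Ev_big (p : P) m : (msize p <= m)%N -> Ev m p = 0.
Proof.
move=> hm; apply/rowP => j; rewrite !mxE pihomogE big_seq_cond big1 ?ev0 //.
move=> m' /andP[/msize_mdeg_lt hlt /eqP he]; move: hlt; rewrite he => hlt.
by move: (leq_trans hlt hm); rewrite ltnn.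
Qed.

Lemma Ev_homog (h : P) d m : h \is d.-homog ->
  Ev m h = if m == d then \row_j ev h (nv j) else 0.
Proof.
move=> hh; case: eqP => [->|/eqP ne]; apply/rowP => j; rewrite !mxE.
  by rewrite pihomog_dE.
by rewrite (pihomog_ne0 _ hh) ?ev0 // eq_sym.
Qed.

Arguments Ev_homog {h d} m.
Lemma Ev_Ml (q p : P) e m : q \is e.-homog ->
  Ev m (q * p) = if (e <= m)%N then \row_j (ev q (nv j) * Ev (m - e) p 0 j) else 0.
Proof.
move=> hq; rewrite /Ev (@pihomogMl e m q p hq); case: leqP => _; apply/rowP => j; rewrite !mxE //.
  by rewrite evM.
by rewrite ev0.
Qed.

Lemma Ev_LX a (p : P) m : Ev m (L ^+ a * p) = if (a <= m)%N then Ev (m - a) p else 0.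
Proof.
rewrite (@Ev_Ml _ p a m (LX_homog a)); case: leqP => // _.
by apply/rowP => j; rewrite !mxE evLX mul1r.
Qed.


Local Notation IX := (IX pts).
Local Notation eqI := (eqI pts).
Local Notation inFl := (inFl pts L).

Lemma IX0 : IX 0.
Proof. by apply/IX_Ev => d; rewrite linear0. Qed.

Lemma eqI_refl x : eqI x x.
Proof. by rewrite /eqI subrr; exact: IX0. Qed.
Lemma eqI_sym x y : eqI x y -> eqI y x.
Proof. by move=> /eqI_Ev h; apply/eqI_Ev => d. Qed.
Lemma eqI_trans x y z : eqI x y -> eqI y z -> eqI x z.
Proof. by move=> /eqI_Ev h1 /eqI_Ev h2; apply/eqI_Ev => d; rewrite h1 h2. Qed.
Lemma eqI_add x y x' y' : eqI x x' -> eqI y y' -> eqI (x + y) (x' + y').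
Proof. by move=> /eqI_Ev h1 /eqI_Ev h2; apply/eqI_Ev => d; rewrite !linearD /= h1 h2. Qed.
Lemma eqI_scale a x y : eqI x y -> eqI (a *: x) (a *: y).
Proof. by move=> /eqI_Ev h1; apply/eqI_Ev => d; rewrite !linearZ /= h1. Qed.

Arguments eqI_sym {x y}.
Arguments eqI_trans {x y z}.
Arguments eqI_add {x y x' y'}.
Arguments eqI_scale a {x y}.

Lemma IX_mulr (x p : P) : IX x -> IX (x * p).
Proof.
move=> /IX_Ev hx; apply/IX_Ev => m.
have hK : (msize x <= msize x)%N by [].
rewrite (pihomog_partitionE hK) mulr_suml linear_sum /= big1 // => d _.
rewrite (@Ev_Ml (pihomog mdeg d x) p d m (pihomogP _ _ _)); case: leqP => // _.
apply/rowP => j; rewrite !mxE.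
have := congr1 (fun v : 'rV[F]_n => v 0 j) (hx d); rewrite !mxE => ->.
by rewrite mul0r.
Qed.

Lemma eqI_mulr x y p : eqI x y -> eqI (x * p) (y * p).
Proof. by rewrite /eqI -mulrBl; apply: IX_mulr. Qed.
Lemma eqI_mull x y p : eqI x y -> eqI (p * x) (p * y).
Proof. by rewrite ![p * _]mulrC; apply: eqI_mulr. Qed.

Arguments eqI_mulr {x y} p.
Arguments eqI_mull {x y} p.
Lemma sum_widen (V : zmodType) (f : nat -> V) b M : (b <= M)%N ->
  (forall m, (b <= m)%N -> f m = 0) ->
  \sum_(0 <= m < b) f m = \sum_(0 <= m < M) f m.
Proof.
move=> hbM hz; rewrite [RHS](big_cat_nat (n:=b)) //=.
by rewrite [X in _ = _ + X]big_nat_cond [X in _ = _ + X]big1 ?addr0 // => m /andP[/andP[hm _] _]; apply: hz.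
Qed.

Definition polyL (c : {poly F}) : P := \sum_(m < size c) c`_m *: L ^+ m.

Lemma polyL_widen (c : {poly F}) B : (size c <= B)%N -> polyL c = \sum_(0 <= m < B) c`_m *: L ^+ m.
Proof.
move=> hB; rewrite /polyL -(big_mkord xpredT (fun m => c`_m *: L ^+ m)).
by apply: sum_widen => // m hm; rewrite nth_default ?scale0r.
Qed.

Arguments polyL_widen {c B}.
Lemma inFl_polyL (c : {poly F}) : inFl (polyL c).
Proof. by exists c; exact: eqI_refl. Qed.

Lemma inFl_eqI x y : eqI x y -> inFl y -> inFl x.
Proof. by move=> h [c hc]; exists c; apply: eqI_trans h hc. Qed.

Lemma inFl_add x y : inFl x -> inFl y -> inFl (x + y).
Proof.
move=> [c hc] [c' hc']; exists (c + c').
apply: (eqI_trans (eqI_add hc hc')).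
have h1 : (size c <= size c + size c')%N by apply: leq_addr.
have h2 : (size c' <= size c + size c')%N by apply: leq_addl.
have h3 : (size (c + c')%R <= size c + size c')%N.
  by apply: leq_trans (size_polyD _ _) _; rewrite geq_max h1 h2.
have := polyL_widen h1; rewrite /polyL => ->.
have := polyL_widen h2; rewrite /polyL => ->.
have := polyL_widen h3; rewrite /polyL => ->.
rewrite -big_split /=; under [X in eqI _ X]eq_bigr do rewrite coefD scalerDl.
exact: eqI_refl.
Qed.

Lemma inFl_scale a x : inFl x -> inFl (a *: x).
Proof.
move=> [c hc]; exists (a *: c); apply: (eqI_trans (eqI_scale a hc)).
have h1 : (size (a *: c) <= size c)%N by apply: size_scale_leq.
have := polyL_widen h1; rewrite /polyL => ->.
rewrite -(big_mkord xpredT (fun m => c`_m *: L ^+ m)) scaler_sumr.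
under [X in eqI _ X]eq_bigr do rewrite coefZ -scalerA.
exact: eqI_refl.
Qed.

Lemma inFl0 : inFl 0.
Proof. by rewrite -(scale0r 0); apply: inFl_scale; exists 0; rewrite /eqI /polyL size_poly0 big_ord0 subrr; exact: IX0. Qed.

Lemma inFl_LX t : inFl (L ^+ t).
Proof.
exists 'X^t; rewrite /polyL size_polyXn big_ord_recr /= big1 ?add0r.
  by rewrite coefXn eqxx scale1r; exact: eqI_refl.
by move=> m _; rewrite coefXn (ltn_eqF (ltn_ord m)) scale0r.
Qed.

Lemma inFl_C a : inFl a%:MP.
Proof.
rewrite -alg_mpolyC; apply: inFl_scale; rewrite -(expr0 L); exact: inFl_LX.
Qed.

Lemma inFl_sum I (r : seq I) (f : I -> P) : (forall x, inFl (f x)) -> inFl (\sum_(x <- r) f x).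
Proof. by move=> h; elim/big_ind: _ => //; [exact: inFl0 | exact: inFl_add]. Qed.


Lemma eqI_sum (I : finType) (f g : I -> P) : (forall a, eqI (f a) (g a)) ->
  eqI (\sum_a f a) (\sum_a g a).
Proof.
move=> h; apply/eqI_Ev => d; rewrite !linear_sum; apply: eq_bigr => a _.
exact: (proj1 (eqI_Ev _ _) (h a)).
Qed.

Section Hom.
Variable phi : P -> P.
Hypothesis hom : is_Fl_hom pts L phi.

Lemma hom_IX x : IX x -> eqI (phi x) 0.
Proof. by case: hom => h1 _ _ _ hx; rewrite /eqI subr0; apply: h1. Qed.

Lemma hom_eq x y : eqI x y -> eqI (phi x) (phi y).
Proof.
case: hom => h1 h2 _ _ hxy.
have := h2 (x - y) y; rewrite subrK => e1.
apply: (eqI_trans e1); rewrite -[X in eqI _ X]add0r; apply: eqI_add (eqI_refl _).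
exact: hom_IX.
Qed.

Lemma hom_sum (I : finType) (f : I -> P) : eqI (phi (\sum_a f a)) (\sum_a phi (f a)).
Proof.
case: hom => h1 h2 _ _.
elim/big_rec2: _ => [|a y1 y2 _ IH]; first exact: hom_IX IX0.
by apply: (eqI_trans (h2 _ _)); apply: eqI_add (eqI_refl _) IH.
Qed.

Lemma hom_scale a x : eqI (phi (a *: x)) (a *: phi x).
Proof.
case: hom => _ _ h3 _; rewrite -!mul_mpolyC; exact: h3 (inFl_C a).
Qed.

Lemma hom_LX t x : eqI (phi (L ^+ t * x)) (L ^+ t * phi x).
Proof. case: hom => _ _ h3 _; exact: h3 (inFl_LX t). Qed.

End Hom.
Arguments hom_IX {phi}.
Arguments hom_eq {phi} hom {x y}.
Arguments hom_sum {phi}.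
Arguments hom_scale {phi}.
Arguments hom_LX {phi}.

Lemma Ev_polyL (c : {poly F}) m j : Ev m (polyL c) 0 j = \sum_(a < size c) c`_a * (m == a)%:R.
Proof.
rewrite /polyL linear_sum summxE; apply: eq_bigr => a _.
rewrite linearZ /= (Ev_homog m (LX_homog a)) mxE; case: eqP => _; rewrite !mxE ?evLX //.
Qed.

Lemma inFl_const u m j j' : inFl u -> Ev m u 0 j = Ev m u 0 j'.
Proof.
by move=> [c /eqI_Ev hc]; rewrite !hc -/(polyL c) !Ev_polyL.
Qed.


Hypothesis n_gt0 : (0 < n)%N.
Definition dot (x y : 'rV[F]_n) : F := \sum_j x 0 j * y 0 j.

Lemma dblK_nec r i d f : f \is d.-homog -> dblK pts L r i f ->
  forall T h, (T + d).+1 = (2 * r + i)%N -> h \is T.-homog -> dot (Ev d f) (Ev T h) = 0.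
Proof.
move=> fh [g [[phi [s [hom hs hg]]] hfg]] T h hT hh.
rewrite (proj1 (eqI_Ev _ _) hfg d) Ev_LX.
case: leqP => hid; last by rewrite /dot big1 // => j _; rewrite !mxE mul0r.
set e := (d - i)%N.
rewrite (proj1 (eqI_Ev _ _) hg e) linear_sum /=.
under eq_bigr do rewrite mulrC (@Ev_Ml _ _ r e (proj1 (hs _))).
case: (leqP r e) => hre; last by rewrite /dot big1 // => j _; rewrite summxE big1 ?mul0r // => a _; rewrite mxE.
have hTr : (T < r)%N by rewrite /e in hre; lia.
set t := (r - T)%N.
have hH : (L ^+ t * h) \is r.-homog.
  by have := dhomogM (LX_homog t) hh; rewrite /t subnK // ltnW.
have key1 : eqI (L ^+ t * h) (\sum_a ev h (nv a) *: s a).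
  apply/eqI_Ev => m; rewrite Ev_LX linear_sum /=.
  under [RHS]eq_bigr do rewrite linearZ /= (Ev_homog m (proj1 (hs _))).
  case: (eqVneq m r) => [->|hmr].
    have -> : (r - t = T)%N by rewrite /t; lia.
    rewrite leq_subr (Ev_homog _ hh) eqxx.
    apply/rowP => j; rewrite summxE mxE (bigD1 j) //= !mxE (proj2 (hs j)) eqxx mulr1.
    rewrite big1 ?addr0 // => a haj; rewrite !mxE (proj2 (hs a)) (negbTE haj) mulr0 //.
  rewrite big1; last by move=> a _; rewrite scaler0.
  case: leqP => // htm; rewrite (Ev_homog _ hh); case: eqP => // hm.
  by exfalso; move: hmr; rewrite /t in htm hm *; apply/negP/negPn/eqP; lia.
have key2 : eqI (L ^+ t * phi h) (\sum_a ev h (nv a) *: phi (s a)).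
  apply: (eqI_trans (eqI_sym (hom_LX hom t h))).
  apply: (eqI_trans (hom_eq hom key1)).
  apply: (eqI_trans (hom_sum hom _ _)).
  by apply: eqI_sum => a; apply: hom_scale.
have := proj1 (eqI_Ev _ _) key2 (e - r)%N.
rewrite Ev_LX (_ : (t <= e - r)%N = false); last by rewrite /t /e in hre *; lia.
rewrite linear_sum /= => /(congr1 (fun v : 'rV[F]_n => v 0 (Ordinal n_gt0))).
rewrite mxE summxE => /esym key3.
rewrite /dot (Ev_homog _ hh) eqxx -[RHS]key3; apply: eq_bigr => j _.
rewrite summxE (bigD1 j) //= !mxE (proj2 (hs j)) eqxx mul1r big1 ?addr0; last first.
  by move=> a haj; rewrite mxE (proj2 (hs a)) (negbTE haj) mul0r.
case: hom => _ _ _ h4.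
rewrite linearZ /= evZ mulrC; have := inFl_const _ (e - r)%N j (Ordinal n_gt0) (h4 (s j)); rewrite !mxE => ->; done.
Qed.


Lemma dot_lin c a x y : dot c (a *: x + y) = a * dot c x + dot c y.
Proof.
rewrite /dot mulr_sumr -big_split; apply: eq_bigr => j _.
by rewrite !mxE mulrDr mulrCA.
Qed.
Lemma dot0 c : dot c 0 = 0.
Proof. by rewrite /dot big1 // => j _; rewrite mxE mulr0. Qed.

Section Phi.
Variables (c : 'rV[F]_n) (e r : nat).
Hypothesis Zc : forall m x, (m + e < 2 * r)%N -> dot c (Ev m x) = 0.

Definition phiC (p : P) : P :=
  \sum_(0 <= m < msize p) dot c (Ev m p) *: L ^+ (m + e - 2 * r).

Lemma phiC_widen p B : (forall m, (B <= m)%N -> Ev m p = 0) ->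
  phiC p = \sum_(0 <= m < B) dot c (Ev m p) *: L ^+ (m + e - 2 * r).
Proof.
move=> hB; rewrite /phiC.
rewrite (@sum_widen _ _ _ (maxn B (msize p))) ?leq_maxr //; last first.
  by move=> m hm; rewrite Ev_big // dot0 scale0r.
rewrite [RHS](@sum_widen _ _ _ (maxn B (msize p))) ?leq_maxl //.
by move=> m hm; rewrite hB // dot0 scale0r.
Qed.

Lemma phiC_lin a x y : phiC (a *: x + y) = a *: phiC x + phiC y.
Proof.
have hB z : (msize z <= msize x + msize y)%N -> forall m, (msize x + msize y <= m)%N -> Ev m z = 0.
  by move=> hz m hm; apply: Ev_big; apply: leq_trans hm.
rewrite (@phiC_widen _ (msize x + msize y)); last first.
  move=> m hm; rewrite linearP /= !(hB _ _ m hm) ?scaler0 ?addr0 //.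
  exact: leq_addl. exact: leq_addr.
rewrite (@phiC_widen x (msize x + msize y)); last by apply: hB; apply: leq_addr.
rewrite (@phiC_widen y (msize x + msize y)); last by apply: hB; apply: leq_addl.
rewrite scaler_sumr -big_split; apply: eq_bigr => m _.
by rewrite linearP /= dot_lin scalerDl scalerA.
Qed.

Lemma phiC0 : phiC 0 = 0.
Proof. by rewrite /phiC msize0 big_geq. Qed.
Lemma phiC_add x y : phiC (x + y) = phiC x + phiC y.
Proof. by have := phiC_lin 1 x y; rewrite !scale1r. Qed.
Lemma phiC_Z a x : phiC (a *: x) = a *: phiC x.
Proof. by have := phiC_lin a x 0; rewrite !addr0 phiC0 addr0. Qed.

Lemma phiC_IX x : IX x -> phiC x = 0.
Proof.
move/IX_Ev => hx; rewrite /phiC big1 // => m _.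
by rewrite hx dot0 scale0r.
Qed.

Lemma phiC_eq x y : eqI x y -> phiC x = phiC y.
Proof.
move=> hxy; rewrite -[x](subrK y) phiC_add phiC_IX ?add0r //.
Qed.

Lemma phiC_LX t x : phiC (L ^+ t * x) = L ^+ t * phiC x.
Proof.
rewrite (@phiC_widen _ (t + msize x)); last first.
  move=> m hm; rewrite Ev_LX; case: leqP => // htm.
  by apply: Ev_big; lia.
rewrite (big_cat_nat (n:=t)) //= ?leq_addr //.
rewrite big_nat_cond big1 ?add0r; last first.
  by move=> m /andP[/andP[_ hm] _]; rewrite Ev_LX leqNgt hm /= dot0 scale0r.
rewrite -[X in \sum_(X <= _ < _) _](add0n t) big_addn addKn.
rewrite /phiC mulr_sumr; apply: eq_bigr => m _.
rewrite Ev_LX leq_addl addnK.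
case: (leqP (2 * r) (m + e)) => hme.
  by rewrite -scalerAr -exprD; congr (_ *: L ^+ _); lia.
by rewrite Zc // !scale0r mulr0.
Qed.

Lemma phiC_inFl x : inFl (phiC x).
Proof. by apply: inFl_sum => m; apply: inFl_scale; apply: inFl_LX. Qed.

Lemma phiC_hom : is_Fl_hom pts L phiC.
Proof.
split.
- by move=> f hf; rewrite phiC_IX //; exact: IX0.
- by move=> f g; rewrite phiC_add; exact: eqI_refl.
- move=> u f [cu hu].
  rewrite (phiC_eq _ _ (eqI_mulr f hu)) mulr_suml.
  rewrite (big_morph phiC phiC_add phiC0).
  apply: (eqI_trans _ (eqI_mulr _ (eqI_sym hu))); rewrite /polyL mulr_suml.
  under eq_bigr do rewrite -scalerAl phiC_Z phiC_LX.
  rewrite (_ : \sum_(i < size cu) cu`_i *: L ^+ i * phiC f = \sum_(i < size cu) cu`_i *: (L ^+ i * phiC f)).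
    exact: eqI_refl.
  by apply: eq_bigr => a _; rewrite scalerAl.
- exact: phiC_inFl.
Qed.

End Phi.


Lemma zero_hom : is_Fl_hom pts L (fun _ => 0).
Proof.
split.
- by move=> *; exact: IX0.
- by move=> f g; rewrite addr0; exact: eqI_refl.
- by move=> u f _; rewrite mulr0; exact: eqI_refl.
- by move=> _; exact: inFl0.
Qed.

Lemma dblK_IX r i f s : is_separators pts L r s -> IX f -> dblK pts L r i f.
Proof.
move=> hs hf; exists 0; split.
  exists (fun _ => 0), s; split => //; first exact: zero_hom.
  by rewrite big1 => [|a _]; [exact: eqI_refl | rewrite mul0r].
by rewrite mulr0 /eqI subr0.
Qed.

Arguments dblK_IX {r i f s}.
Lemma dblK_suff r i d f s : is_separators pts L r s -> f \is d.-homog -> (r + i <= d)%N ->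
  (forall m x, (m + (d - i) < 2 * r)%N -> dot (Ev d f) (Ev m x) = 0) -> dblK pts L r i f.
Proof.
move=> hs hf hd Zc.
set c := Ev d f; set e := (d - i)%N.
have hc : c = \row_j ev f (nv j) by rewrite /c (Ev_homog d hf) eqxx.
have hps a : phiC c e r (s a) = c 0 a *: L ^+ (e - r).
  rewrite (@phiC_widen c e r _ r.+1); last first.
    by move=> m hm; rewrite (Ev_homog m (proj1 (hs a))) (gtn_eqF hm).
  rewrite big_nat_recr //= big_nat_cond big1 ?add0r; last first.
    by move=> m /andP[/andP[_ hm] _]; rewrite (Ev_homog m (proj1 (hs a))) (ltn_eqF hm) dot0 scale0r.
  rewrite (Ev_homog r (proj1 (hs a))) eqxx (_ : (r + e - 2 * r = e - r)%N); last by lia.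
  congr (_ *: _); rewrite /dot (bigD1 a) //= mxE (proj2 (hs a)) eqxx mulr1 big1 ?addr0 //.
  by move=> j hja; rewrite mxE (proj2 (hs a)) eq_sym (negbTE hja) mulr0.
exists (\sum_a phiC c e r (s a) * s a); split.
  exists (phiC c e r), s; split => //; last exact: eqI_refl.
  exact: phiC_hom.
have hd' : (i + (e - r) + r = d)%N by rewrite /e; lia.
have hh a : L ^+ (i + (e - r)) * s a \is d.-homog.
  by rewrite -hd'; apply: dhomogM (LX_homog _) (proj1 (hs a)).
rewrite (_ : L ^+ i * _ = \sum_a c 0 a *: (L ^+ (i + (e - r)) * s a)); last first.
  rewrite mulr_sumr; apply: eq_bigr => a _.
  by rewrite hps -scalerAl scalerAr mulrA exprD scalerAr.
apply/eqI_Ev => m; rewrite linear_sum /= (Ev_homog m hf).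
under eq_bigr do rewrite linearZ /= (Ev_homog m (hh _)).
case: eqP => _; last by rewrite big1 // => a _; rewrite scaler0.
rewrite -hc; apply/rowP => j; rewrite summxE (bigD1 j) //= !mxE evM evLX mul1r.
rewrite (proj2 (hs j)) eqxx mulr1 big1 ?addr0 // => a haj.
by rewrite !mxE evM evLX mul1r (proj2 (hs a)) (negbTE haj) mulr0.
Qed.

Arguments dblK_suff {r i d f s}.
Lemma Ev_pihomog T z : Ev T (pihomog mdeg T z) = Ev T z.
Proof. by apply/rowP => j; rewrite !mxE pihomog_id. Qed.

Lemma dblK_char r i d f s : is_separators pts L r s -> f \is d.-homog ->
  dblK pts L r i f <->
  (forall T h, (T + d).+1 = (2 * r + i)%N -> h \is T.-homog -> dot (Ev d f) (Ev T h) = 0).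
Proof.
move=> hs hf; split; first exact: dblK_nec.
move=> H; case: (ltnP d (r + i)) => hd.
  apply: (dblK_IX hs); apply/IX_Ev => m.
  have E0 : Ev d f = 0.
    apply/rowP => j; set T := (2 * r + i - d - 1)%N.
    have hT : (T + d).+1 = (2 * r + i)%N by rewrite /T; lia.
    have hhj : L ^+ (T - r) * s j \is T.-homog.
      by have := dhomogM (LX_homog (T - r)) (proj1 (hs j)); rewrite subnK // /T; lia.
    have := H T _ hT hhj; rewrite /dot (Ev_homog T hhj) eqxx (bigD1 j) //= big1 ?addr0.
      by rewrite !mxE evM evLX mul1r (proj2 (hs j)) eqxx mulr1.
    by move=> a haj; rewrite !mxE evM evLX mul1r (proj2 (hs j)) eq_sym (negbTE haj) mulr0.
  rewrite (Ev_homog m hf); case: eqP => [hmd|_] //.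
  by rewrite -E0 (Ev_homog d hf) eqxx.
apply: (dblK_suff hs hf hd) => m x hm.
set T := (2 * r + i - d - 1)%N.
have hT : (T + d).+1 = (2 * r + i)%N by rewrite /T; lia.
have -> : Ev m x = Ev T (pihomog mdeg T (L ^+ (T - m) * x)).
  by rewrite Ev_pihomog Ev_LX leq_subr subKn //; rewrite /T; lia.
by apply: H hT (pihomogP _ _ _).
Qed.


Lemma IX_homog d x : x \is d.-homog -> IX x <-> Ev d x = 0.
Proof.
move=> hx; rewrite IX_Ev; split => [h|h m]; first exact: h.
rewrite (Ev_homog m hx); case: eqP => // _.
by rewrite -h (Ev_homog d hx) eqxx.
Qed.

Arguments IX_homog {d x}.
Arguments dblK_char {r i d f s}.
Lemma small_dblK r i d f s : is_separators pts L r s -> f \is d.-homog -> (d < r + i)%N ->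
  dblK pts L r i f <-> IX f.
Proof.
move=> hs hf hd; split; last exact: dblK_IX hs.
move=> /(proj1 (dblK_char hs hf)) H; apply/(IX_homog hf).
apply/rowP => j; set T := (2 * r + i - d - 1)%N.
have hT : (T + d).+1 = (2 * r + i)%N by rewrite /T; lia.
have hhj : L ^+ (T - r) * s j \is T.-homog.
  by have := dhomogM (LX_homog (T - r)) (proj1 (hs j)); rewrite subnK // /T; lia.
have := H T _ hT hhj; rewrite /dot (Ev_homog T hhj) eqxx (bigD1 j) //= big1 ?addr0.
  by rewrite !mxE evM evLX mul1r (proj2 (hs j)) eqxx mulr1.
by move=> a haj; rewrite !mxE evM evLX mul1r (proj2 (hs j)) eq_sym (negbTE haj) mulr0.
Qed.

Local Notation DH d := (dhomog k.+1 F d).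

Definition Evh d (x : DH d) : 'rV[F]_n := Ev d (mpoly_of_dhomog x).
Lemma Evh_is_linear d : linear (@Evh d).
Proof. by move=> a x y; rewrite /Evh !linearP. Qed.
HB.instance Definition _ d := GRing.isLinear.Build F (DH d) 'rV[F]_n _ (@Evh d) (@Evh_is_linear d).
Definition Evf d : 'Hom(DH d, 'rV[F]_n) := linfun (@Evh d).

Lemma pboolP (A : Prop) : reflect A (pbool A).
Proof. by rewrite /pbool; case: excluded_middle_informative => h; constructor. Qed.

Lemma hpart_eq (K : P -> Prop) d (U : {vspace DH d}) :
  (forall x : DH d, K x <-> x \in U) -> hpart K d = U.
Proof.
move=> hU; rewrite /hpart; apply/eqP; rewrite eqEsubv; apply/andP; split.
  apply/span_subvP => x /mapP [y]; rewrite mem_filter => /andP[/pboolP hp _] ->.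
  exact/hU.
apply/subvP => x hx; apply: memv_span; apply/mapP; exists x => //.
rewrite mem_filter; apply/andP; split; last by have := mem_enum (finvect_type (dhomog k.+1 F d)) x; rewrite inE. 
apply/pboolP; exact/hU.
Qed.

Lemma qdim_eq (K : P -> Prop) d (U : {vspace DH d}) :
  (forall x : DH d, K x <-> x \in U) -> qdim K d = (\dim (fullv : {vspace DH d}) - \dim U)%N.
Proof. by move=> hU; rewrite /qdim (@hpart_eq K d U hU). Qed.

Lemma dim_limg (aT rT : vectType F) (f : 'Hom(aT, rT)) : (\dim (fullv : {vspace aT}) - \dim (lker f))%N = \dim (limg f).
Proof. by have := limg_ker_dim f fullv; rewrite capfv => <-; rewrite addKn. Qed.

Lemma HF_eq d : HF pts d = \dim (limg (Evf d)).
Proof.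
rewrite /HF (@qdim_eq _ _ (lker (Evf d))) ?dim_limg // => x.
by rewrite memv_ker lfunE /= /Evh (IX_homog (dhomog_is_dhomog x)); split => [->|/eqP].
Qed.

Lemma HF_pos d : HF pts d <> 0%N.
Proof.
rewrite HF_eq => /eqP; rewrite dimv_eq0 => /eqP h0.
have hL : L ^+ d \is d.-homog by apply: LX_homog.
have : Evf d (DHomog hL) \in limg (Evf d) by apply: memv_img; exact: memvf.
rewrite h0 memv0 lfunE /= /Evh /= => /eqP /(congr1 (fun v : 'rV[F]_n => v 0 (Ordinal n_gt0))).
rewrite !mxE pihomog_dE // evLX => /eqP; by rewrite oner_eq0.
Qed.


Lemma dimrV m : \dim (fullv : {vspace 'rV[F]_m}) = m.
Proof. by rewrite dimvf /dim /= mul1n. Qed.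

Lemma full_r r : HF pts r = n -> limg (Evf r) = fullv.
Proof.
rewrite HF_eq => h; apply/eqP; rewrite eqEdim subvf /= dimrV h //.
Qed.

Lemma sep_exists r : HF pts r = n -> exists s, is_separators pts L r s.
Proof.
move/full_r => hf.
have : forall j : 'I_n, exists u : DH r, delta_mx 0 j = Evf r u.
  move=> j; have : delta_mx 0 j \in limg (Evf r) by rewrite hf memvf.
  by case/memv_imgP => u _ ->; exists u.
case/fin_all_exists => u hu; exists (fun j => mpoly_of_dhomog (u j)) => a; split.
  exact: dhomog_is_dhomog.
move=> j; have := congr1 (fun v : 'rV[F]_n => v 0 j) (hu a).
rewrite lfunE /= /Evh !mxE pihomog_dE ?eqxx ?dhomog_is_dhomog //= => <-.
by rewrite eq_sym.
Qed.

Lemma Ev_sep r s j : is_separators pts L r s -> Ev r (s j) = delta_mx 0 j.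
Proof.
move=> hs; rewrite (Ev_homog r (proj1 (hs j))) eqxx; apply/rowP => a.
by rewrite !mxE (proj2 (hs j)) eqxx /= eq_sym.
Qed.

Lemma full_d r d s : is_separators pts L r s -> (r <= d)%N -> limg (Evf d) = fullv.
Proof.
move=> hs hrd; apply/eqP; rewrite eqEsubv subvf /=; apply/subvP => y _.
rewrite (row_sum_delta y); apply: memv_suml => j _; apply: memvZ.
have hh : L ^+ (d - r) * s j \is d.-homog.
  by have := dhomogM (LX_homog (d - r)) (proj1 (hs j)); rewrite subnK.
have -> : delta_mx 0 j = Evf d (DHomog hh).
  by rewrite lfunE /= /Evh /= Ev_LX leq_subr subKn // (Ev_sep _ _ _ hs).
by apply: memv_img; exact: memvf.
Qed.

Lemma dot_linl z a x y : dot (a *: x + y) z = a * dot x z + dot y z.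
Proof.
rewrite /dot mulr_sumr -big_split; apply: eq_bigr => j _.
by rewrite !mxE mulrDl mulrA.
Qed.
Lemma dot_sumr x I (r0 : seq I) (f : I -> 'rV[F]_n) :
  dot x (\sum_(b <- r0) f b) = \sum_(b <- r0) dot x (f b).
Proof.
rewrite /dot (exchange_big_dep xpredT) //=; apply: eq_bigr => j _.
by rewrite summxE mulr_sumr.
Qed.
Lemma dot_scaler x a y : dot x (a *: y) = a * dot x y.
Proof. by rewrite -[a *: y]addr0 dot_lin dot0 addr0. Qed.

Definition psi (W : {vspace 'rV[F]_n}) (x : 'rV[F]_n) : 'rV[F]_(\dim W) :=
  \row_b dot x (vbasis W)`_b.
Lemma psi_is_linear W : linear (psi W).
Proof.
move=> a x y; apply/rowP => b; rewrite !mxE.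
exact: dot_linl.
Qed.
HB.instance Definition _ W := GRing.isLinear.Build F 'rV[F]_n 'rV[F]_(\dim W) _ (psi W) (psi_is_linear W).

Lemma psi_full W : limg (linfun (psi W)) = fullv.
Proof.
apply/eqP; rewrite eqEsubv subvf /=; apply/subvP => y _.
rewrite (row_sum_delta y); apply: memv_suml => b _; apply: memvZ.
set w := vbasis W.
have -> : delta_mx 0 b = linfun (psi W) (\row_j coord w b (delta_mx 0 j)).
  apply/rowP => b'; rewrite lfunE /= !mxE /dot.
  have -> : \sum_j (\row_j0 coord w b (delta_mx 0 j0)) 0 j * w`_b' 0 j =
            coord w b (\sum_j w`_b' 0 j *: delta_mx 0 j).
    rewrite linear_sum; apply: eq_bigr => j _; rewrite linearZ /= mxE.
    by rewrite mulrC.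
  rewrite -row_sum_delta coord_free; last exact: basis_free (vbasisP W).
  by rewrite eq_sym.
by apply: memv_img; exact: memvf.
Qed.

Lemma psi_ker W y : y \in lker (linfun (psi W)) <-> (forall z, z \in W -> dot y z = 0).
Proof.
rewrite memv_ker lfunE /=; split.
  move=> /eqP h z hz; rewrite (coord_vbasis hz) dot_sumr big1 // => b _.
  rewrite dot_scaler; have := congr1 (fun v : 'rV[F]_(\dim W) => v 0 b) h.
  by rewrite !mxE => ->; rewrite mulr0.
move=> h; apply/eqP/rowP => b; rewrite !mxE; apply: h.
by apply: vbasis_mem; apply: mem_nth; rewrite size_tuple.
Qed.


Lemma IX_ker d (x : DH d) : IX x <-> x \in lker (Evf d).
Proof.
by rewrite memv_ker lfunE /= /Evh (IX_homog (dhomog_is_dhomog x)); split => [->|/eqP].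
Qed.

Arguments small_dblK {r i d f s}.
Arguments full_d {r d s}.

Lemma HFD_small r i d s : is_separators pts L r s -> (d < r + i)%N -> HFD pts L r i d = HF pts d.
Proof.
move=> hs hd; rewrite /HFD /HF (@qdim_eq _ d (lker (Evf d))) ?(@qdim_eq _ d (lker (Evf d))) //.
  by move=> x; apply: IX_ker.
by move=> x; rewrite -IX_ker; apply: small_dblK hs (dhomog_is_dhomog x) hd.
Qed.

Lemma HFD_big r i d s : is_separators pts L r s -> (2 * r + i <= d)%N -> HFD pts L r i d = 0%N.
Proof.
move=> hs hd; rewrite /HFD (@qdim_eq _ d fullv) ?subnn // => x; split => _; first exact: memvf.
apply/(dblK_char hs (dhomog_is_dhomog x)) => T h hT; exfalso; lia.
Qed.

Lemma HFD_mid r i d s : is_separators pts L r s -> (r + i <= d)%N -> (d < 2 * r + i)%N ->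
  HFD pts L r i d = HF pts (2 * r + i - d - 1).
Proof.
move=> hs hd1 hd2; set T := (2 * r + i - d - 1)%N.
set W := limg (Evf T).
rewrite /HFD (@qdim_eq _ d (lker (linfun (psi W) \o Evf d)%VF)).
  rewrite dim_limg limg_comp (full_d hs) ?(leq_trans (leq_addr i r) hd1) //.
  by rewrite psi_full dimrV HF_eq.
move=> x; rewrite memv_ker comp_lfunE -memv_ker psi_ker.
rewrite (dblK_char hs (dhomog_is_dhomog x)); split.
  move=> H z /memv_imgP [h _ ->]; rewrite !lfunE /= /Evh.
  by apply: H (dhomog_is_dhomog h); rewrite /T; lia.
move=> H T' h hT' hh; have eT : T' = T by rewrite /T; lia.
subst T'; have := H (Evf T (DHomog hh)); rewrite !lfunE /= /Evh /=; apply.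
have -> : Ev T h = Evf T (DHomog hh) by rewrite lfunE.
by apply: memv_img; exact: memvf.
Qed.

Arguments HFD_small {r i d s}.
Arguments HFD_big {r i d s}.
Arguments HFD_mid {r i d s}.
Lemma main r (hr : is_rX pts r) i :
  [/\ forall j, (j < r + i)%N -> HFD pts L r i j = HF pts j,
      forall j, HFD pts L r i (r + i + j) = HFz pts (r%:Z - 1 - j%:Z),
      forall d, (2 * r + i <= d)%N -> HFD pts L r i d = 0%N
    & forall d, d.+1 = (2 * r + i)%N -> HFD pts L r i d <> 0%N].
Proof.
have [hrn _] := hr; have [s hs] := sep_exists _ hrn.
have P2 : forall j, HFD pts L r i (r + i + j) = HFz pts (r%:Z - 1 - j%:Z).
  move=> j; case: (ltnP j r) => hj.
    rewrite (HFD_mid hs) ?leq_addr //; last by lia.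
    have -> : (r%:Z - 1 - j%:Z) = Posz (2 * r + i - (r + i + j) - 1) by lia.
    by [].
  rewrite (HFD_big hs); last by lia.
  by have -> : (r%:Z - 1 - j%:Z) = Negz (j - r) by rewrite NegzE; lia.
split => //.
- by move=> j hj; apply: HFD_small hs hj.
- by move=> d hd; apply: HFD_big hs hd.
move=> d hd; case: (posnP r) => hr0.
  rewrite (HFD_small hs); last by lia.
  exact: HF_pos.
have -> : d = (r + i + (r - 1))%N by lia.
rewrite P2; have -> : (r%:Z - 1 - (r - 1)%N%:Z) = 0 by lia.
exact: HF_pos.
Qed.

End S.

Theorem proposition6p2 (F : finFieldType) (k n : nat)
    (pts : 'I_n -> 'rV[F]_k.+1) (L : {mpoly F[k.+1]})
    (n_gt0 : (0 < n)%N)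
    (pts_nz : forall j, pts j != 0)
    (pts_distinct : forall a b (c : F), a != b -> pts a != c *: pts b)
    (L_lin : L \is 1.-homog)
    (L_nz : forall j, ev L (pts j) != 0)
    (r : nat) (hr : is_rX pts r) (i : nat) :
  [/\ forall j, (j < r + i)%N -> HFD pts L r i j = HF pts j,
      forall j, HFD pts L r i (r + i + j) = HFz pts (r%:Z - 1 - j%:Z),
      forall d, (2 * r + i <= d)%N -> HFD pts L r i d = 0%N
    & forall d, d.+1 = (2 * r + i)%N -> HFD pts L r i d <> 0%N].
Proof. by apply: main. Qed.
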